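(* Let $\beta\ge1$ and suppose there are at least two distinct alternate Lyndon words over a finite alphabet $\mathcal{A}$ attached to $\beta$. Then there exists a weak (i.e. periodic) alternate Lyndon word attached to $\beta$.
   Context: Alternate order: for two words $x=x_1x_2\cdots$, $y=y_1y_2\cdots$ over a finite alphabet of integers, $x\prec y$ iff there is $k$ with $x_i=y_i$ for all $i<k$ and $(-1)^k(x_k-y_k)<0$; $x\preceq y$ iff $x=y$ or $x\prec y$. An alternate Lyndon word is an infinite word $(d_i)_{i\ge1}$ with $d_1d_2\cdots\preceq d_nd_{n+1}\cdots$ for all $n\ge1$; it is weak if equality $d_1d_2\cdots=d_nd_{n+1}\cdots$ holds for some $n>1$ (equivalently, it is purely periodic). Its alternate Lyndon system is the set of infinite words $x$ with $d_1d_2\cdots\preceq x_kx_{k+1}\cdots$ for all $k\ge1$, and its entropy is $\lim_n\frac1n\log H_n$ with $H_n$ the number of words of length $n$ occurring as finite factors of elements of the system. An alternate Lyndon word is attached (associated) to $\beta$ if its alternate Lyndon system has entropy $\log\beta$. *)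

(* Defs.v *)
From Stdlib Require Import Reals ZArith List.
Import ListNotations.
Open Scope R_scope.

(* Infinite words over the integers, indexed from 0 (paper indexes from 1). *)
Definition word := nat -> Z.

Definition shift (n : nat) (x : word) : word := fun i => x (n + i)%nat.

Definition over (A : list Z) (x : word) : Prop := forall i, In (x i) A.

(* Alternate order: x < y iff there is k (1-based; k = j+1 with j 0-based)
   with x_i = y_i for i < k and (-1)^k (x_k - y_k) < 0. *)
Definition alt_lt (x y : word) : Prop :=
  exists j : nat, (forall i, (i < j)%nat -> x i = y i) /\
    (Z.pow (-1) (Z.of_nat (S j)) * (x j - y j) < 0)%Z.

Definition alt_le (x y : word) : Prop := (forall i, x i = y i) \/ alt_lt x y.

(* Alternate Lyndon word over A: d <= d_n d_{n+1} ... for all n >= 1,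
   i.e. d <= shift n d for all n >= 0 (0-based). *)
Definition alt_lyndon (A : list Z) (d : word) : Prop :=
  over A d /\ forall n : nat, alt_le d (shift n d).

(* Weak: d_1 d_2 ... = d_n d_{n+1} ... for some n > 1, i.e. d = shift n d, n >= 1. *)
Definition weak (d : word) : Prop :=
  exists n : nat, (1 <= n)%nat /\ forall i, d i = shift n d i.

Definition lyndon_system (A : list Z) (d : word) (x : word) : Prop :=
  over A x /\ forall k : nat, alt_le d (shift k x).

Definition sys_factor (A : list Z) (d : word) (n : nat) (w : list Z) : Prop :=
  length w = n /\
  exists x, lyndon_system A d x /\
    exists k : nat, forall i, (i < n)%nat -> nth i w 0%Z = x (k + i)%nat.

Definition is_card (P : list Z -> Prop) (h : nat) : Prop :=
  exists L : list (list Z), NoDup L /\ (forall w, In w L <-> P w) /\ length L = h.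

(* The alternate Lyndon system of d has entropy log beta:
   H_n = number of factors of length n, and (1/n) log H_n -> log beta. *)
Definition attached (A : list Z) (d : word) (beta : R) : Prop :=
  exists H : nat -> nat,
    (forall n, is_card (sys_factor A d n) (H n)) /\
    Un_cv (fun m => ln (INR (H (S m))) / INR (S m)) (ln beta).

(* Main.v *)
Require Import Defs.
From Stdlib Require Import Reals ZArith List Lia Lra Classical ClassicalEpsilon.
Open Scope R_scope.

Definition sgn (n : nat) : Z := Z.pow (-1) (Z.of_nat n).

Lemma sgn_add m n : sgn (m + n) = (sgn m * sgn n)%Z.
Proof. unfold sgn. rewrite Nat2Z.inj_add. apply Z.pow_add_r; lia. Qed.

Lemma sgn_1 : sgn 1 = (-1)%Z. Proof. reflexivity. Qed.
Lemma sgn_0 : sgn 0 = 1%Z. Proof. reflexivity. Qed.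

Lemma sgn_double k : sgn (2 * k) = 1%Z.
Proof.
  induction k. reflexivity.
  replace (2 * S k)%nat with (2 * k + 1 + 1)%nat by lia.
  rewrite !sgn_add, IHk, sgn_1. lia.
Qed.

Lemma sgn_cases n : sgn n = 1%Z \/ sgn n = (-1)%Z.
Proof.
  destruct (Nat.Even_or_Odd n) as [[k ->]|[k ->]].
  - left; apply sgn_double.
  - right. rewrite sgn_add, sgn_double, sgn_1. lia.
Qed.

Lemma sgn_odd k : sgn (2 * k + 1) = (-1)%Z.
Proof. rewrite sgn_add, sgn_double, sgn_1. lia. Qed.

Lemma first_diff (x y : word) n : x n <> y n ->
  exists j, (j <= n)%nat /\ (forall i, (i < j)%nat -> x i = y i) /\ x j <> y j.
Proof.
  induction n as [n IH] using (well_founded_induction lt_wf). intros Hn.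
  destruct (classic (forall i, (i < n)%nat -> x i = y i)) as [H|H].
  - exists n. split; [lia|auto].
  - apply not_all_ex_not in H. destruct H as [i Hi].
    apply imply_to_and in Hi. destruct Hi as [Hi1 Hi2].
    destruct (IH i Hi1 Hi2) as [j [? [? ?]]]. exists j. split; [lia|auto].
Qed.

Lemma alt_lt_at x y e : alt_lt x y -> (forall i, (i < e)%nat -> x i = y i) -> x e <> y e ->
  (sgn (S e) * (x e - y e) < 0)%Z.
Proof.
  intros [j [Hj Hs]] Ha Hne. fold (sgn (S j)) in Hs.
  destruct (lt_eq_lt_dec j e) as [[H|H]|H].
  - rewrite (Ha j H) in Hs. lia.
  - subst; auto.
  - exfalso. apply Hne. auto.
Qed.

Lemma alt_le_at x y e : alt_le x y -> (forall i, (i < e)%nat -> x i = y i) -> x e <> y e ->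
  (sgn (S e) * (x e - y e) < 0)%Z.
Proof.
  intros [H|H] Ha Hne. - exfalso; apply Hne, H. - eapply alt_lt_at; eauto.
Qed.

Lemma mk_lt x y e : (forall i, (i < e)%nat -> x i = y i) ->
  (sgn (S e) * (x e - y e) < 0)%Z -> alt_lt x y.
Proof. intros. exists e. split; auto. Qed.

Lemma alt_lt_trans x y z : alt_lt x y -> alt_lt y z -> alt_lt x z.
Proof.
  intros [j1 [H1 S1]] [j2 [H2 S2]]. fold (sgn (S j1)) in S1. fold (sgn (S j2)) in S2.
  destruct (lt_eq_lt_dec j1 j2) as [[H|H]|H].
  - apply (mk_lt _ _ j1).
    + intros i Hi. rewrite H1 by lia. apply H2. lia.
    + rewrite <- (H2 j1 H). auto.
  - subst. apply (mk_lt _ _ j2).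
    + intros i Hi. rewrite H1 by lia. apply H2. lia.
    + destruct (sgn_cases (S j2)) as [E|E]; rewrite E in *; lia.
  - apply (mk_lt _ _ j2).
    + intros i Hi. rewrite H1 by lia. apply H2. lia.
    + rewrite (H1 j2 H). auto.
Qed.

Lemma alt_le_trans x y z : alt_le x y -> alt_le y z -> alt_le x z.
Proof.
  intros [H1|H1] [H2|H2].
  - left. intros i. rewrite H1. auto.
  - right. destruct H2 as [j [Hj Hs]]. exists j. split.
    + intros i Hi. rewrite H1. auto.
    + rewrite H1. auto.
  - right. destruct H1 as [j [Hj Hs]]. exists j. split.
    + intros i Hi. rewrite <- H2. auto.
    + rewrite <- H2. auto.
  - right. eapply alt_lt_trans; eauto.
Qed.

Lemma alt_le_ext x y y' : (forall i, y i = y' i) -> alt_le x y -> alt_le x y'.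
Proof.
  intros E H. eapply alt_le_trans. exact H. left. exact E.
Qed.

Lemma between_weak (A : list Z) (a b : word) :
  alt_lyndon A a -> alt_lyndon A b -> alt_lt a b ->
  exists q, alt_lyndon A q /\ weak q /\ alt_le a q /\ alt_le q b.
Proof.
  intros [Oa La] [Ob Lb] [j [Hag Hsg]]. fold (sgn (S j)) in Hsg.
  assert (Hne : a j <> b j) by (intro E; rewrite E in Hsg; lia).
  set (L := (2 * (j / 2 + 1))%nat).
  assert (HjL : (j < L)%nat /\ (L <= j + 2)%nat).
  { pose proof (Nat.div_mod_eq j 2). pose proof (Nat.mod_upper_bound j 2). unfold L. lia. }
  assert (HL0 : L <> 0%nat) by lia.
  set (q := fun i => b (i mod L)).
  assert (Qs : forall i, (i < L)%nat -> q i = b i).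
  { intros i Hi. unfold q. rewrite Nat.mod_small; auto. }
  assert (Qp : forall i n, q (i + n * L)%nat = q i).
  { intros i n. unfold q. rewrite Nat.Div0.mod_add. auto. }
  assert (Qsh : forall n i, q (n + i)%nat = q ((n mod L) + i)%nat).
  { intros n i. unfold q. rewrite Nat.Div0.add_mod_idemp_l. auto. }
  assert (CI : forall r, (0 < r < L)%nat ->
            (exists t, (t < L - r)%nat /\ b (r + t)%nat <> b t) -> alt_lt q (Defs.shift r q)).
  { intros r Hr [t [Ht Hbt]].
    destruct (first_diff b (Defs.shift r b) t) as [e [He [Hbe Hde]]].
    { unfold Defs.shift. auto. }
    pose proof (alt_le_at _ _ _ (Lb r) Hbe Hde) as S1.
    apply (mk_lt _ _ e).
    - intros i Hi. unfold Defs.shift. rewrite !Qs by lia. apply Hbe. auto.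
    - unfold Defs.shift in *. rewrite !Qs by lia. auto. }
  exists q. split; [split|split; [|split]].
  - intros i. unfold q. apply Ob.
  -
    intros n. apply (alt_le_ext _ (Defs.shift (n mod L) q)).
    { intros i. unfold Defs.shift. rewrite <- Qsh. auto. }
    pose proof (Nat.mod_upper_bound n L HL0) as Hr.
    set (r := (n mod L)) in *. clearbody r.
    destruct (Nat.eq_dec r 0) as [->|Hr0].
    { left. intros i. reflexivity. }
    destruct (classic (exists t, (t < L - r)%nat /\ b (r + t)%nat <> b t)) as [Hc|Hc].
    { right. apply CI; auto. lia. }
    assert (H : forall t, (t < L - r)%nat -> b (r + t)%nat = b t).
    { intros t Ht. destruct (Z.eq_dec (b (r+t)%nat) (b t)); auto. exfalso; apply Hc; eauto. }
    destruct (Nat.Even_or_Odd r) as [[m Hm]|[m Hm]].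
    +
      exfalso.
      assert (Hrj : (r <= j)%nat) by (unfold L in *; lia).
      set (i := (j - r)%nat).
      assert (Hbj : b j = b i).
      { replace j with (r + i)%nat by (unfold i; lia). apply H. unfold i; lia. }
      assert (Hai : forall t, (t < i)%nat -> a t = Defs.shift r a t).
      { intros t Ht. unfold Defs.shift. rewrite (Hag t) by (unfold i in *; lia).
        rewrite (Hag (r+t)%nat) by (unfold i in *; lia). symmetry; apply H. unfold i in *; lia. }
      assert (Hdi : a i <> Defs.shift r a i).
      { unfold Defs.shift. replace (r + i)%nat with j by (unfold i; lia).
        rewrite (Hag i) by (unfold i; lia). rewrite <- Hbj. auto. }
      pose proof (alt_le_at _ _ _ (La r) Hai Hdi) as S1. unfold Defs.shift in S1.
      replace (r + i)%nat with j in S1 by (unfold i; lia).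
      rewrite (Hag i) in S1 by (unfold i; lia). rewrite <- Hbj in S1.
      assert (Es : sgn (S j) = sgn (S i)).
      { replace (S j) with (S i + 2 * m)%nat by (unfold i; lia). rewrite sgn_add, sgn_double. lia. }
      rewrite Es in Hsg. destruct (sgn_cases (S i)) as [E|E]; rewrite E in *; lia.
    +
      set (k := (L - r)%nat).
      assert (Hk : exists m', k = (2 * m' + 1)%nat).
      { exists (j / 2 - m)%nat. unfold k, L in *. lia. }
      destruct Hk as [m' Hm'].
      destruct (classic (exists t, (t < r)%nat /\ b (k + t)%nat <> b t)) as [Hc2|Hc2].
      * right. assert (Ck : alt_lt q (Defs.shift k q)).
        { apply CI. unfold k; lia. destruct Hc2 as [t [? ?]]. exists t. split; auto. unfold k; lia. }
        destruct Ck as [e [He Hse]]. fold (sgn (S e)) in Hse. unfold Defs.shift in *.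
        assert (HqL : forall s, q (r + (k + s))%nat = q s).
        { intros s. replace (r + (k + s))%nat with (s + 1 * L)%nat by (unfold k; lia). apply Qp. }
        apply (mk_lt _ _ (k + e)).
        -- intros i Hi. unfold Defs.shift. destruct (lt_dec i k).
           ++ rewrite !Qs by (unfold k in *; lia). symmetry. apply H. unfold k in *; lia.
           ++ replace i with (k + (i - k))%nat by lia. rewrite HqL. symmetry. apply He. lia.
        -- unfold Defs.shift. rewrite HqL.
           replace (S (k + e)) with (S e + k)%nat by lia. rewrite sgn_add. assert (Sk : sgn k = (-1)%Z) by (rewrite Hm'; apply sgn_odd). rewrite Sk.
           destruct (sgn_cases (S e)) as [E|E]; rewrite E in *; lia.
      * left. assert (H2 : forall t, (t < r)%nat -> b (k + t)%nat = b t).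
        { intros t Ht. destruct (Z.eq_dec (b (k+t)%nat) (b t)); auto. exfalso; apply Hc2; eauto. }
        intros i. unfold Defs.shift. unfold q. rewrite <- Nat.Div0.add_mod_idemp_r.
        pose proof (Nat.mod_upper_bound i L HL0).
        set (s := (i mod L)) in *. clearbody s.
        idtac.
        destruct (lt_dec s k).
        -- rewrite (Nat.mod_small (r + s)) by (unfold k in *; lia). symmetry; apply H. unfold k in *; lia.
        -- replace (r + s)%nat with ((s - k) + 1 * L)%nat by (unfold k in *; lia).
           rewrite Nat.Div0.mod_add, Nat.mod_small by (unfold k in *; lia).
           replace s with (k + (s - k))%nat at 1 by lia. apply H2. unfold k in *; lia.
  - exists L. split. lia. intros i. unfold Defs.shift. rewrite Nat.add_comm. replace (i + L)%nat with (i + 1 * L)%nat by lia. rewrite (Qp i 1%nat). auto.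
  - right. apply (mk_lt _ _ j).
    + intros i Hi. rewrite Qs by lia. auto.
    + rewrite Qs by lia. auto.
  - destruct (classic (forall i, q i = b i)) as [E|E]. { left; auto. }
    apply not_all_ex_not in E. destruct E as [m0 Hm0].
    destruct (first_diff q b m0 Hm0) as [m [_ [Hqm Hdm]]].
    right. apply (mk_lt _ _ m); auto.
    pose proof (Nat.div_mod_eq m L) as Em. pose proof (Nat.mod_upper_bound m L HL0).
    set (n := (m / L)%nat) in *. set (t := (m mod L)) in *. clearbody n t.
    assert (Hqt : q m = q t). { rewrite Em. rewrite Nat.add_comm, Nat.mul_comm. apply Qp. }
    assert (A1 : forall i, (i < t)%nat -> b i = Defs.shift (n * L) b i).
    { intros i Hi. unfold Defs.shift. rewrite <- Qs by lia.
      rewrite <- Hqm by lia. rewrite Nat.add_comm. symmetry. apply Qp. }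
    assert (A2 : b t <> Defs.shift (n * L) b t).
    { unfold Defs.shift. rewrite <- Qs by lia. rewrite <- Hqt. replace (n * L + t)%nat with m by lia. exact Hdm. }
    pose proof (alt_le_at _ _ _ (Lb (n * L)%nat) A1 A2) as S1. unfold Defs.shift in S1.
    rewrite <- (Qs t) in S1 by lia. rewrite <- Hqt in S1.
    replace (n * L + t)%nat with m in S1 by lia.
    replace (S m) with (S t + 2 * (n * (j/2+1)))%nat by (unfold L in *; lia).
    rewrite sgn_add, sgn_double. lia.
Qed.

Lemma factor_mono A d d' n w : alt_le d d' -> sys_factor A d' n w -> sys_factor A d n w.
Proof.
  intros Hle [Hl [x [[Ox Sx] Hk]]]. split; auto. exists x. split; auto.
  split; auto. intros k. eapply alt_le_trans; eauto.
Qed.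

Lemma card_le (P P' : list Z -> Prop) h h' : is_card P h -> is_card P' h' ->
  (forall w, P w -> P' w) -> (h <= h')%nat.
Proof.
  intros [L [ND [HL <-]]] [L' [ND' [HL' <-]]] Hi.
  apply NoDup_incl_length; auto. intros w Hw. apply HL', Hi, HL, Hw.
Qed.

Lemma card_exists (P P' : list Z -> Prop) h' : is_card P' h' ->
  (forall w, P w -> P' w) -> exists h, is_card P h.
Proof.
  intros [L' [ND' [HL' _]]] Hi.
  set (f := fun w => if excluded_middle_informative (P w) then true else false).
  exists (length (filter f L')). exists (filter f L'). split; [|split]; auto.
  - apply NoDup_filter; auto.
  - intros w. rewrite filter_In. unfold f. destruct (excluded_middle_informative (P w)).
    + split; auto. intros _. split; auto. apply HL', Hi; auto.
    + split. intros [_ H]; discriminate. intros H; contradiction.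
Qed.

Lemma card_pos A d n h : alt_lyndon A d -> is_card (sys_factor A d n) h -> (1 <= h)%nat.
Proof.
  intros [Od Ld] [L [_ [HL <-]]].
  assert (Hin : In (map d (seq 0 n)) L).
  { apply HL. split. { rewrite length_map, length_seq. auto. }
    exists d. split. { split; auto. }
    exists 0%nat. intros i Hi. simpl.
    rewrite (nth_indep (map d (seq 0 n)) (n:=i) 0%Z (d 0%nat)) by (rewrite length_map, length_seq; auto).
    rewrite map_nth, seq_nth by auto. reflexivity. }
  destruct L. contradiction. simpl; lia.
Qed.

Lemma ln_le' x y : 0 < x -> x <= y -> ln x <= ln y.
Proof.
  intros Hx [H|H]. left; apply ln_increasing; auto. right; subst; auto.
Qed.

Lemma squeeze (lo mid hi : nat -> R) l : (forall n, lo n <= mid n <= hi n) ->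
  Un_cv lo l -> Un_cv hi l -> Un_cv mid l.
Proof.
  intros Hb Hl Hh eps He.
  destruct (Hl eps He) as [N1 H1]. destruct (Hh eps He) as [N2 H2].
  exists (max N1 N2). intros n Hn. unfold R_dist in *.
  specialize (H1 n ltac:(lia)). specialize (H2 n ltac:(lia)). specialize (Hb n).
  apply Rabs_def2 in H1. apply Rabs_def2 in H2. apply Rabs_def1; lra.
Qed.

Lemma main_ord (A : list Z) (beta : R) a b :
  alt_lyndon A a -> attached A a beta -> alt_lyndon A b -> attached A b beta -> alt_lt a b ->
  exists d : word, alt_lyndon A d /\ weak d /\ attached A d beta.
Proof.
  intros La [Ha [HHa Ca]] Lb [Hb [HHb Cb]] Hab.
  destruct (between_weak A a b La Lb Hab) as [q [Lq [Wq [Haq Hqb]]]].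
  exists q. split; auto. split; auto.
  assert (Ex : forall n, {h | is_card (sys_factor A q n) h}).
  { intros n. apply constructive_indefinite_description.
    apply (card_exists _ _ (Ha n) (HHa n)). intros w. apply factor_mono; auto. }
  exists (fun n => proj1_sig (Ex n)). split.
  { intros n. exact (proj2_sig (Ex n)). }
  apply (squeeze (fun m => ln (INR (Hb (S m))) / INR (S m)) _
                 (fun m => ln (INR (Ha (S m))) / INR (S m))); auto.
  intros m. destruct (Ex (S m)) as [h Hh]. cbn [proj1_sig].
  assert (E1 : (Hb (S m) <= h)%nat).
  { apply (card_le _ _ _ _ (HHb (S m)) Hh). intros w. apply factor_mono; auto. }
  assert (E2 : (h <= Ha (S m))%nat).
  { apply (card_le _ _ _ _ Hh (HHa (S m))). intros w. apply factor_mono; auto. }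
  pose proof (card_pos _ _ _ _ Lb (HHb (S m))).
  assert (Hp : 0 < / INR (S m)) by (apply Rinv_0_lt_compat, lt_0_INR; lia).
  assert (P1 : 0 < INR (Hb (S m))) by (apply lt_0_INR; lia).
  assert (P2 : 0 < INR h) by (apply lt_0_INR; lia).
  assert (I1 : INR (Hb (S m)) <= INR h) by (apply le_INR; lia).
  assert (I2 : INR h <= INR (Ha (S m))) by (apply le_INR; lia).
  pose proof (ln_le' _ _ P1 I1). pose proof (ln_le' _ _ P2 I2).
  unfold Rdiv. split; apply Rmult_le_compat_r; lra.
Qed.

Theorem proposition9 (A : list Z) (beta : R) :
  1 <= beta ->
  (exists d1 d2 : word,
      alt_lyndon A d1 /\ attached A d1 beta /\
      alt_lyndon A d2 /\ attached A d2 beta /\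
      exists i, d1 i <> d2 i) ->
  exists d : word, alt_lyndon A d /\ weak d /\ attached A d beta.
Proof.
  intros _ [d1 [d2 [L1 [A1 [L2 [A2 [i Hi]]]]]]].
  destruct (first_diff d1 d2 i Hi) as [j [_ [Hag Hne]]].
  destruct (Z_lt_le_dec (sgn (S j) * (d1 j - d2 j)) 0) as [Hs|Hs].
  - apply (main_ord A beta d1 d2); auto. apply (mk_lt _ _ j); auto.
  - apply (main_ord A beta d2 d1); auto. apply (mk_lt _ _ j).
    + intros k Hk. symmetry; auto.
    + destruct (sgn_cases (S j)) as [E|E]; rewrite E in *; lia.
Qed.
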